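(* Let $\mu$ be an integer with $h/2<\mu\le h$ and $p\in\mathcal P$. Then $D_\mu(p)=\bigcup_{\Gamma\in\mathcal C(\Gamma_\mu(p))}\max(\Gamma)\supseteq\bigcup_{\Gamma\in\mathcal A(\Gamma_\mu(p))}\max(\Gamma)\supseteq \mathrm I(\Gamma_\mu(p))$ and $|D_\mu(p)|=\sum_{\Gamma\in\mathcal C(\Gamma_\mu(p))}|\max(\Gamma)|\ge|\mathcal A(\Gamma_\mu(p))|\ge|\mathrm I(\Gamma_\mu(p))|$.
   Context: Let $n,h\ge2$, $N=\{1,\dots,n\}$, $H=\{1,\dots,h\}$, $\mathcal P$ the set of $h$-tuples of linear orders on $N$; $x>_{p_i}y$ means $x\neq y$ and $p_i$ ranks $x$ above $y$. Write $x>^p_\mu y$ if $|\{i: x>_{p_i}y\}|\ge\mu$; $D_\mu(p)=\{x\in N: \forall y,\ |\{i: y>_{p_i}x\}|<\mu\}$. The $\mu$-majority graph is the directed graph $\Gamma_\mu(p)=(N,\{(x,y): x>^p_\mu y\})$. For a directed graph $\Gamma=(V,A)$ (with $A\subseteq\{(x,y)\in V^2:x\ne y\}$): $\max(\Gamma)$ is the set of $x\in V$ with no $y$ such that $(y,x)\in A$; $\mathrm I(\Gamma)$ is the set of vertices $x$ with $(x,y),(y,x)\notin A$ for all $y\ne x$; connected components are those of the underlying undirected graph; a cycle is a subgraph on distinct vertices $x_1,\dots,x_l$ ($l\ge2$) with arcs exactly $(x_j,x_{j+1})$, $x_{l+1}=x_1$; $\Gamma$ is acyclic if it has no cycle as a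 subgraph. $\mathcal C(\Gamma_\mu(p))$ is the set of connected components of $\Gamma_\mu(p)$ and $\mathcal A(\Gamma_\mu(p))$ the set of those that are acyclic. *)

(* Defs.v *)
From mathcomp Require Import all_boot all_order.
From mathcomp Require Import fingraph fingroup perm.
Set Implicit Arguments. Unset Strict Implicit. Unset Printing Implicit Defensive.

(* A directed graph is given by a vertex set S : {set V} and an arc relation
   A : rel V (only arcs between vertices of S count). *)
Section Digraph.
Variable V : finType.
Implicit Types (S C : {set V}) (A : rel V).

Definition gmax S A : {set V} := [set x in S | [forall y in S, ~~ A y x]].

Definition gisolated S A : {set V} :=
  [set x in S | [forall y in S, (y != x) ==> (~~ A x y && ~~ A y x)]].

Definition uadj A : rel V := fun x y => A x y || A y x.

Definition gcomponents A : {set {set V}} :=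
  [set [set y | connect (uadj A) x y] | x : V].

(* Since the vertices are
   distinct, l <= #|V|, so quantifying over lengths l <= #|V| loses nothing. *)
Definition has_cycle S A : bool :=
  [exists l : 'I_(#|V|).+1, [exists t : l.-tuple V,
     [&& 2 <= l, uniq t, all (fun x => x \in S) t & path.cycle A t]]].

Definition acyclic S A : bool := ~~ has_cycle S A.

Definition acyclic_components A : {set {set V}} :=
  [set C in gcomponents A | acyclic C A].

End Digraph.

(* Alternatives N = 'I_n, individuals H = 'I_h.  A linear order on 'I_n is
   encoded by a permutation r giving positions: x is ranked above y iff
   r x < r y (position 0 = top). *)
Definition profile (n h : nat) := 'I_h -> {perm 'I_n}.

Definition above n h (p : profile n h) (i : 'I_h) (x y : 'I_n) : bool :=
  (x != y) && (p i x < p i y).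

Definition support n h (p : profile n h) (x y : 'I_n) : nat :=
  #|[set i | above p i x y]|.

Definition mu_beats n h (p : profile n h) (mu : nat) (x y : 'I_n) : bool :=
  mu <= support p x y.

Definition Dmu n h (p : profile n h) (mu : nat) : {set 'I_n} :=
  [set x | [forall y, support p y x < mu]].

(* arc relation of the mu-majority graph Gamma_mu(p) = (N, {(x,y) : x >^p_mu y}),
   restricted to x <> y as required of directed graphs *)
Definition maj_arc n h (p : profile n h) (mu : nat) : rel 'I_n :=
  fun x y => (x != y) && mu_beats p mu x y.

(* Main.v *)
Require Import Defs.
From mathcomp Require Import all_boot all_order fingroup perm.
From mathcomp Require Import zify.
Set Implicit Arguments. Unset Strict Implicit. Unset Printing Implicit Defensive.

Section G.
Variable V : finType.
Variable A : rel V.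
Hypothesis irrA : forall x, ~~ A x x.

Lemma uniq_size_le (s : seq V) : uniq s -> size s <= #|V|.
Proof. by move/card_uniqP <-; apply: max_card. Qed.

Lemma found_cycle (S : {set V}) x s y :
  uniq (x :: s) -> all (fun z => z \in S) (x :: s) -> path A x s ->
  A y x -> y \in x :: s -> has_cycle S A.
Proof.
move=> us aS pA Ayx yin; case/splitPl: yin us aS pA => p1 p2 ly us aS pA.
have u1 : uniq (x :: p1) by move: us; rewrite -cat_cons cat_uniq => /andP[].
have a1 : all (fun z => z \in S) (x :: p1) by move: aS; rewrite -cat_cons all_cat => /andP[].
have pl : size (x :: p1) < (#|V|).+1 by rewrite ltnS uniq_size_le.
apply/existsP; exists (Ordinal pl); apply/existsP; exists (in_tuple (x :: p1)).
apply/and4P; split; [|exact: u1|exact: a1|].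
  rewrite /=; case: p1 ly {u1 a1 pl us aS pA} => [/= ly|]; last by [].
  by move: Ayx; rewrite ly (negbTE (irrA y)).
rewrite /= rcons_path ly Ayx andbT.
by move: pA; rewrite cat_path => /andP[].
Qed.

Lemma pred_cycle_aux (S : {set V}) :
  (forall x, x \in S -> exists2 y, y \in S & A y x) ->
  forall m s x, #|V| - size (x :: s) <= m ->
  uniq (x :: s) -> all (fun z => z \in S) (x :: s) -> path A x s -> has_cycle S A.
Proof.
move=> hS; elim=> [|m IH] s x hm us aS pA.
  have [y yS Ayx] := hS x (andP aS).1.
  have [yin|yout] := boolP (y \in x :: s); first exact: found_cycle Ayx yin.
  have := uniq_size_le (s := y :: x :: s); rewrite /= yout.
  move: us hm => /= -> /= hm /(_ isT) /= h; exfalso; lia.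
have [y yS Ayx] := hS x (andP aS).1.
have [yin|yout] := boolP (y \in x :: s); first exact: found_cycle Ayx yin.
apply: (IH (x :: s) y).
- have := uniq_size_le (s := y :: x :: s); rewrite /= yout.
  move: us hm => /= -> /= hm /(_ isT); lia.
- by rewrite cons_uniq yout us.
- by rewrite /= yS.
- by rewrite /= Ayx.
Qed.

Lemma acyclic_source (S : {set V}) x : x \in S -> acyclic S A ->
  exists z, z \in gmax S A.
Proof.
move=> xS ac; apply/existsP; apply: contraNT ac => /existsPn nz.
apply: (@pred_cycle_aux S _ #|V| [::] x) => //=; last by rewrite xS.
- move=> z zS; move: (nz z); rewrite inE zS /= => /forallPn [y].
  by rewrite negb_imply negbK => /andP[yS Ayz]; exists y.
- lia.
Qed.

Lemma usym : symmetric (uadj A).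
Proof. by move=> x y; rewrite /uadj orbC. Qed.
Let csym := sym_connect_sym usym.

Lemma comp_closed C x y : C \in gcomponents A -> x \in C -> A y x -> y \in C.
Proof.
case/imsetP=> c _ -> ; rewrite !inE => cx Ayx.
by apply: connect_trans cx (connect1 _); rewrite /uadj Ayx orbT.
Qed.

Lemma gmax_comp C : C \in gcomponents A -> gmax C A = C :&: gmax setT A.
Proof.
move=> Cc; apply/setP=> x; rewrite !inE /=.
case xC: (x \in C) => //=; apply/forall_inP/forall_inP => [h y _|h y _].
  by apply: contraT; rewrite negbK => Ayx; move: (h y (comp_closed Cc xC Ayx)); rewrite Ayx.
by apply: h; rewrite inE.
Qed.

Lemma in_comp x : x \in [set y | connect (uadj A) x y].
Proof. by rewrite inE connect0. Qed.

Lemma comp_cover : \bigcup_(C in gcomponents A) gmax C A = gmax setT A.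
Proof.
apply/setP=> x; apply/bigcupP/idP => [[C Cc]|xG].
  by rewrite gmax_comp // inE => /andP[].
exists [set y | connect (uadj A) x y]; first exact: imset_f.
by rewrite gmax_comp ?imset_f // inE in_comp.
Qed.

Lemma comps_triv : trivIset (gcomponents A).
Proof.
apply/trivIsetP=> C D /imsetP[c _ ->] /imsetP[d _ ->] neq.
apply/pred0P=> z /=; rewrite !inE; apply/negbTE; apply: contra neq => /andP[cz dz].
apply/eqP/setP=> w; rewrite !inE (same_connect csym cz) (same_connect csym dz) //.
Qed.

Lemma cover_comps : cover (gcomponents A) = setT.
Proof.
apply/setP=> x; rewrite inE; apply/bigcupP; exists [set y | connect (uadj A) x y].
  exact: imset_f.
exact: in_comp.
Qed.

Lemma card_comps : #|gmax setT A| = \sum_(C in gcomponents A) #|gmax C A|.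
Proof.
have e1 (D : {set V}) : \sum_(x in D) (x \in gmax setT A : nat) = #|D :&: gmax setT A|.
  rewrite -sum1_card; transitivity (\sum_(x in D | x \in gmax setT A) 1).
    by rewrite big_mkcondr /=; apply: eq_bigr => x _; case: (x \in gmax setT A).
  by apply: eq_bigl => x; rewrite !inE.
set G := gmax setT A.
rewrite -(setTI G) -e1.
have -> : \sum_(x in [set: V]) (x \in G : nat) = \sum_(x in cover (gcomponents A)) (x \in G : nat).
  by rewrite cover_comps.
rewrite (big_trivIset _ comps_triv).
apply: eq_bigr => C Cc; rewrite gmax_comp //; exact: e1.
Qed.


Lemma iso_comp x : x \in gisolated setT A -> [set y | connect (uadj A) x y] = [set x].
Proof.
move=> xi; apply/setP=> y; rewrite !inE; apply/idP/idP; last by move/eqP->; apply: connect0.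
case/connectP=> [[|z q]] /= => [_ ->//|/andP[xz _] _].
move: xi; rewrite /gisolated inE => /andP[_ /forall_inP /(_ z (in_setT z))].
have zx : z != x by apply: contraTneq xz => ->; rewrite /uadj (negbTE (irrA x)).
by rewrite zx /= => /andP[/negbTE h1 /negbTE h2]; move: xz; rewrite /uadj h1 h2.
Qed.

Lemma acyc1 x : acyclic [set x] A.
Proof.
apply/negP=> /existsP[l /existsP[t /and4P[l2 ut aS _]]].
have : size t <= size [:: x].
  apply: uniq_leq_size ut _ => z zt; move/allP: aS => /(_ z zt); rewrite !inE.
  by move/eqP->; rewrite eqxx.
by rewrite size_tuple /=; move: l2; case: (nat_of_ord l) => [|[|]].
Qed.

Lemma comp_in x : [set y | connect (uadj A) x y] \in gcomponents A.
Proof. exact: imset_f. Qed.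

Lemma iso_sub : gisolated setT A \subset \bigcup_(C in acyclic_components A) gmax C A.
Proof.
apply/subsetP=> x xi; apply/bigcupP; exists [set x].
  by rewrite inE -(iso_comp xi) comp_in /= (iso_comp xi) acyc1.
rewrite inE set11 /=; apply/forall_inP=> y; rewrite inE => /eqP ->; exact: irrA.
Qed.

Lemma acyc_comp C : C \in acyclic_components A -> C \in gcomponents A.
Proof. by rewrite inE => /andP[]. Qed.

Lemma acyc_sub : \bigcup_(C in acyclic_components A) gmax C A
   \subset \bigcup_(C in gcomponents A) gmax C A.
Proof.
apply/bigcupsP=> C CA; apply: (bigcup_sup C); exact: acyc_comp.
Qed.

Lemma card_acyc : #|acyclic_components A| <= \sum_(C in gcomponents A) #|gmax C A|.
Proof.
rewrite (big_setID (acyclic_components A)) /=.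
have -> : gcomponents A :&: acyclic_components A = acyclic_components A.
  by apply/setIidPr/subsetP=> C; apply: acyc_comp.
apply: leq_trans (leq_addr _ _); rewrite -sum1_card; apply: leq_sum => C CA.
rewrite card_gt0; apply/set0Pn.
move: CA; rewrite inE => /andP[/imsetP[c _ ->] ac].
exact: acyclic_source (in_comp c) ac.
Qed.

Lemma card_iso : #|gisolated setT A| <= #|acyclic_components A|.
Proof.
rewrite -(@card_in_imset _ _ (fun x => [set x])); last by move=> x y _ _ /set1_inj.
apply: subset_leq_card; apply/subsetP=> C /imsetP[x xi ->].
by rewrite inE -(iso_comp xi) comp_in /= (iso_comp xi) acyc1.
Qed.
End G.

Lemma irr_maj n h (p : profile n h) mu : forall x, ~~ maj_arc p mu x x.
Proof. by move=> x; rewrite /maj_arc eqxx. Qed.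

Lemma Dmu_gmax n h (p : profile n h) mu : 0 < mu -> Dmu p mu = gmax setT (maj_arc p mu).
Proof.
move=> mu0; apply/setP=> x; rewrite !inE /=; apply/forallP/forall_inP => [H y _|H y].
  by rewrite /maj_arc /mu_beats negb_and -ltnNge H orbT.
have [->|yx] := eqVneq y x.
  suff -> : Defs.support p x x = 0 by [].
  by apply/eqP; rewrite cards_eq0; apply/eqP/setP=> i; rewrite !inE /above eqxx.
by move: (H y (in_setT y)); rewrite /maj_arc /mu_beats yx /= -ltnNge.
Qed.

Theorem proposition6 (n h mu : nat) (p : profile n h) :
  2 <= n -> 2 <= h -> h < 2 * mu -> mu <= h ->
  [/\ Dmu p mu = \bigcup_(C in gcomponents (maj_arc p mu)) gmax C (maj_arc p mu),
      \bigcup_(C in acyclic_components (maj_arc p mu)) gmax C (maj_arc p mu)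
        \subset \bigcup_(C in gcomponents (maj_arc p mu)) gmax C (maj_arc p mu) &
      gisolated [set: 'I_n] (maj_arc p mu)
        \subset \bigcup_(C in acyclic_components (maj_arc p mu)) gmax C (maj_arc p mu)] /\
  [/\ #|Dmu p mu| = \sum_(C in gcomponents (maj_arc p mu)) #|gmax C (maj_arc p mu)|,
      #|acyclic_components (maj_arc p mu)|
        <= \sum_(C in gcomponents (maj_arc p mu)) #|gmax C (maj_arc p mu)|
    & #|gisolated [set: 'I_n] (maj_arc p mu)| <= #|acyclic_components (maj_arc p mu)|].
Proof.
move=> _ h2 hmu _.
have mu0 : 0 < mu by lia.
have irr := @irr_maj n h p mu.
rewrite (Dmu_gmax p mu0); split; split.
- by rewrite comp_cover.
- exact: acyc_sub.
- exact: iso_sub.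
- exact: card_comps.
- exact: card_acyc.
- exact: card_iso.
Qed.
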